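(* Let $W\in[0,1]^{k\times k}$ be a symmetric positive semidefinite matrix with all diagonal entries equal to $1$, let ${\boldsymbol\mu}\in\mathbb{R}^k$, and consider the collaborative learning problem with strategy space $\mathbb{R}_+^k$ and linear utilities ${\bf u}({\boldsymbol\theta})=W{\boldsymbol\theta}$ and thresholds $\mu_i$. Then the program $$\min\ \sum_{i=1}^k\theta_i\quad\text{s.t.}\quad W{\boldsymbol\theta}\ge{\boldsymbol\mu},\ \ {\boldsymbol\theta}\ge\mathbf{0},\ \ {\boldsymbol\theta}^\top W{\boldsymbol\theta}-{\boldsymbol\mu}^\top{\boldsymbol\theta}\le0$$ is a convex program, and its optimal solutions are optimal stable equilibria (stable equilibria minimizing $\mathbf{1}^\top{\boldsymbol\theta}$).
   Context: ${\boldsymbol\theta}$ is feasible if $u_i({\boldsymbol\theta})\ge\mu_i$ for all $i$. A feasible ${\boldsymbol\theta}\in\mathbb{R}_+^k$ is a stable equilibrium if for no $i$ is there $0\le\theta_i'<\theta_i$ with $u_i(\theta_i',{\boldsymbol\theta}_{-i})\ge\mu_i$, where $(x,{\boldsymbol\theta}_{-i})$ denotes ${\boldsymbol\theta}$ with $i$-th entry replaced by $x$. *)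

(* Defs.v *)
From HB Require Import structures.
From mathcomp Require Import all_boot all_order all_algebra.
From mathcomp Require Import reals.
Set Implicit Arguments. Unset Strict Implicit. Unset Printing Implicit Defensive.
Import Order.TTheory GRing.Theory Num.Theory.
Local Open Scope ring_scope.

Section CL.
Variables (R : realType) (k : nat).

Definition utility (W : 'M[R]_k) (theta : 'cV[R]_k) (i : 'I_k) : R :=
  (W *m theta) i 0.

Definition replace_entry (theta : 'cV[R]_k) (i : 'I_k) (x : R) : 'cV[R]_k :=
  \col_j (if j == i then x else theta j 0).

Definition nonneg_vec (theta : 'cV[R]_k) : Prop := forall i, 0 <= theta i 0.

Definition feasible (W : 'M[R]_k) (mu theta : 'cV[R]_k) : Prop :=
  nonneg_vec theta /\ forall i, mu i 0 <= utility W theta i.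

Definition stable_equilibrium (W : 'M[R]_k) (mu theta : 'cV[R]_k) : Prop :=
  feasible W mu theta /\
  forall i (x : R), 0 <= x -> x < theta i 0 ->
    ~ (mu i 0 <= utility W (replace_entry theta i x) i).

Definition total (theta : 'cV[R]_k) : R := \sum_i theta i 0.

Definition quad_constraint (W : 'M[R]_k) (mu theta : 'cV[R]_k) : R :=
  (theta^T *m W *m theta) 0 0 - (mu^T *m theta) 0 0.

Definition program_feasible (W : 'M[R]_k) (mu theta : 'cV[R]_k) : Prop :=
  (forall i, mu i 0 <= (W *m theta) i 0) /\ nonneg_vec theta /\
  quad_constraint W mu theta <= 0.

Definition program_optimal (W : 'M[R]_k) (mu theta : 'cV[R]_k) : Prop :=
  program_feasible W mu theta /\
  forall theta', program_feasible W mu theta' -> total theta <= total theta'.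

Definition optimal_stable_equilibrium (W : 'M[R]_k) (mu theta : 'cV[R]_k) : Prop :=
  stable_equilibrium W mu theta /\
  forall theta', stable_equilibrium W mu theta' -> total theta <= total theta'.

Definition convex_fun (f : 'cV[R]_k -> R) : Prop :=
  forall (x y : 'cV[R]_k) (t : R), 0 <= t -> t <= 1 ->
    f (t *: x + (1 - t) *: y) <= t * f x + (1 - t) * f y.

End CL.

(* Main.v *)
Require Import Defs.
From HB Require Import structures.
From mathcomp Require Import all_boot all_order all_algebra.
From mathcomp Require Import reals.
From mathcomp Require Import lra.
Import Order.TTheory GRing.Theory Num.Theory.
Local Open Scope ring_scope.

Section Aux.
Variables (R : realType) (k : nat) (W : 'M[R]_k).

Definition B (x y : 'cV[R]_k) : R := (x^T *m W *m y) 0 0.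

Lemma B_addl (a b : R) (x y z : 'cV[R]_k) : B (a *: x + b *: y) z = a * B x z + b * B y z.
Proof.
rewrite /B linearD !linearZ /= !mulmxDl -!scalemxAl.
by rewrite -?scalemxAl !mxE.
Qed.

Lemma B_addr (a b : R) (x y z : 'cV[R]_k) : B z (a *: x + b *: y) = a * B z x + b * B z y.
Proof.
by rewrite /B !mulmxDr -!scalemxAr !mxE.
Qed.

Lemma lin_add (mu : 'cV[R]_k) (a b : R) (x y : 'cV[R]_k) :
  (mu^T *m (a *: x + b *: y)) 0 0 = a * (mu^T *m x) 0 0 + b * (mu^T *m y) 0 0.
Proof. by rewrite !mulmxDr -!scalemxAr !mxE. Qed.

Lemma quad_sum (mu th : 'cV[R]_k) :
  quad_constraint W mu th = \sum_i th i 0 * ((W *m th) i 0 - mu i 0).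
Proof.
rewrite /quad_constraint -mulmxA !mxE -sumrB; apply: eq_bigr => i _.
by rewrite !mxE mulrBr [mu i 0 * _]mulrC.
Qed.

Lemma util_replace th i x (hd : W i i = 1) :
  utility W (replace_entry th i x) i = utility W th i - th i 0 + x.
Proof.
rewrite /utility !mxE (bigD1 i) //= (bigD1 i (P := xpredT)) //= !mxE eqxx hd !mul1r.
have -> : \sum_(j < k | j != i) W i j * (replace_entry th i x) j 0 =
          \sum_(j < k | j != i) W i j * th j 0.
  by apply: eq_bigr => j /negbTE hj; rewrite !mxE hj.
lra.
Qed.

End Aux.
Arguments B {R k}.
Arguments util_replace {R k W}.

Lemma quadB (R : realType) (k : nat) (W : 'M[R]_k) mu th :
  quad_constraint W mu th = B W th th - (mu^T *m th) 0 0.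
Proof. by []. Qed.

Lemma feas_stable (R : realType) (k : nat) (W : 'M[R]_k) mu th
  (hWdiag : forall i, W i i = 1) :
  program_feasible W mu th -> stable_equilibrium W mu th.
Proof.
move=> [hmu [hnn hq]]; split; first by split.
have tge0 : forall i : 'I_k, 0 <= th i 0 * ((W *m th) i 0 - mu i 0).
  by move=> i; apply: mulr_ge0 => //; rewrite subr_ge0.
have s0 : \sum_i th i 0 * ((W *m th) i 0 - mu i 0) = 0.
  apply: le_anti; rewrite -quad_sum hq /=.
  by rewrite quad_sum; apply: sumr_ge0 => i _.
move/psumr_eq0P: s0 => s0.
move=> i x x0 xlt; rewrite util_replace // => hu.
have := s0 (fun j _ => tge0 j) i isT => /eqP; rewrite mulf_eq0 => /orP [/eqP e|].
  by rewrite e in xlt; move: (lt_le_trans xlt x0); rewrite ltxx.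
rewrite subr_eq0 => /eqP e; move: hu; rewrite /utility e.
move=> hu; have : th i 0 <= x by lra.
by rewrite leNgt xlt.
Qed.

Lemma stable_feas (R : realType) (k : nat) (W : 'M[R]_k) mu th
  (hWdiag : forall i, W i i = 1) :
  stable_equilibrium W mu th -> program_feasible W mu th.
Proof.
move=> [[hnn hmu] hst]; split; first by [].
split; first by [].
rewrite quad_sum; apply: sumr_le0 => i _.
have h0 := hnn i.
have hm := hmu i; rewrite /utility in hm.
case: (leP ((W *m th) i 0 - mu i 0) 0) => hs.
  by rewrite mulr_ge0_le0.
case: (ltP 0 (th i 0)) => hp; last first.
  have e : th i 0 = 0 by apply: le_anti; rewrite hp h0.
  by rewrite e mul0r.
exfalso.
case: (leP (th i 0 - ((W *m th) i 0 - mu i 0)) 0) => hx.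
- apply: (hst i 0 (lexx 0) hp); rewrite util_replace // /utility; lra.
- apply: (hst i (th i 0 - ((W *m th) i 0 - mu i 0))); first by lra.
  + lra.
  + rewrite util_replace // /utility; lra.
Qed.

Theorem theorem5 (R : realType) (k : nat) (W : 'M[R]_k) (mu : 'cV[R]_k)
  (hW01 : forall i j, 0 <= W i j /\ W i j <= 1)
  (hWsym : W^T = W)
  (hWpsd : forall x : 'cV[R]_k, 0 <= (x^T *m W *m x) 0 0)
  (hWdiag : forall i, W i i = 1) :
  (* convex program: linear objective, linear constraints, convex quadratic
     constraint function (hence also a convex feasible set) *)
  (convex_fun (quad_constraint W mu) /\
   (forall (x y : 'cV[R]_k) (t : R), 0 <= t -> t <= 1 ->
      program_feasible W mu x -> program_feasible W mu y ->
      program_feasible W mu (t *: x + (1 - t) *: y))) /\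
  (* optimal solutions are optimal stable equilibria *)
  (forall theta, program_optimal W mu theta ->
     optimal_stable_equilibrium W mu theta).

Proof.
have cvx : convex_fun (quad_constraint W mu).
  move=> x y t t0 t1; rewrite !quadB B_addl !B_addr lin_add.
  have P := hWpsd (1 *: x + (-1) *: y).
  rewrite -/(B W _ _) B_addl !B_addr in P.
  have t2 : 0 <= 1 - t by lra.
  have h := mulr_ge0 (mulr_ge0 t0 t2) P.
  nra.
split; first split => //.
  move=> x y t t0 t1 [hx1 [hx2 hx3]] [hy1 [hy2 hy3]]; split; [|split].
  - move=> i;
    have h1 := hx1 i; have h2 := hy1 i; move: h1 h2.
    rewrite mulmxDr -!scalemxAr; set a := W *m x; set b := W *m y; clearbody a b; rewrite !mxE => h1 h2.
    have t2 : 0 <= 1 - t by lra.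
    have := mulr_ge0 t0 (_ : 0 <= a i 0 - mu i 0); have := mulr_ge0 t2 (_ : 0 <= b i 0 - mu i 0).
    move=> /(_ ltac:(lra)) p1 /(_ ltac:(lra)) p2; nra.
  - move=> i; rewrite !mxE; have := hx2 i; have := hy2 i; have t2 : 0 <= 1 - t by lra.
    move=> h1 h2; have := mulr_ge0 t0 h2; have := mulr_ge0 t2 h1; nra.
  - apply: le_trans (cvx x y t t0 t1) _; nra.
move=> th [hf hopt]; split; first exact: feas_stable.
by move=> th' /(@stable_feas _ _ _ _ _ hWdiag) /hopt.
Qed.
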